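(* Let $q$ be a positive integer and let $G=(V,E)$ be an undirected graph with $4q$ vertices. Then $G$ has a two-factor $E'$ all of whose cycle lengths are multiples of four if and only if $(G,\alpha)$ admits a $q$-biased $(2,2)$-dissolution, where $\alpha(v)=1$ for all $v\in V$.
   Context: A two-factor of $G=(V,E)$ is an edge subset $E'\subseteq E$ such that every vertex has degree exactly two in $(V,E')$, so $(V,E')$ is a disjoint union of cycles. For $V'\subseteq V(G)$ let $Z(V',G):=\{(x,y)\mid x\in V',\ y\in V(G)\setminus V',\ \{x,y\}\in E(G)\}$. For positive integers $s,\Delta_s$, an $(s,\Delta_s)$-dissolution for $G$ is a pair $(D,z)$ with $D\subset V(G)$ and $z\colon Z(D,G)\to\{0,\dots,s\}$ such that (a) each $v'\in D$ satisfies $\sum_{(v',v)\in Z(D,G)} z(v',v)=s$, and (b) each $v\in V(G)\setminus D$ satisfies $\sum_{(v',v)\in Z(D,G)} z(v',v)=\Delta_s$. Given $\alpha\colon V(G)\to\{0,\dots,s\}$ and an integer $r_\alpha$, a tuple $(D,z,z_\alpha,R_\alpha)$ is an $r_\alpha$-biased $(s,\Delta_s)$-dissolution for $(G,\alpha)$ if $(D,z)$ is an $(s,\Delta_s)$-dissolution, $z_\alpha\colon Z(D,G)\to\{0,\dots,s\}$, $R_\alpha\subseteq V(G)\setminus D$ with $|R_\alpha|=r_\alpha$, and (c) $z_\alpha(v',v)\le z(v',v)$ for all $(v',v)\in Z(D,G)$; (d) each $v'\in D$ satisfies $\sum_{(v',v)\in Z(D,G)} z_\alpha(v',v)=\alpha(v')$;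 (e) each $v\in R_\alpha$ satisfies $\alpha(v)+\sum_{(v',v)\in Z(D,G)} z_\alpha(v',v)>(s+\Delta_s)/2$. *)

(* Defs.v *)
From mathcomp Require Import all_boot.
Set Implicit Arguments. Unset Strict Implicit. Unset Printing Implicit Defensive.

Section Defs.
Variable T : finType.

Definition simple_graph (e : rel T) : Prop := symmetric e /\ irreflexive e.

Definition deg (F : rel T) (v : T) : nat := #|[set u | F v u]|.

(* An edge subset E' of E, encoded as a symmetric relation F contained in e,
   such that every vertex has degree exactly 2. *)
Definition two_factor (e F : rel T) : Prop :=
  symmetric F /\ (forall x y, F x y -> e x y) /\ (forall v, deg F v = 2).

(* The cycles of a two-factor are its connected components; the length of a
   cycle is the number of its vertices. *)
Definition cycle_lengths_mult4 (F : rel T) : Prop :=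
  forall v : T, 4 %| #|[set u | connect F v u]|.

(* (s, Delta_s)-dissolution (D, z); z is only meaningful on Z(D,G) =
   {(x,y) | x in D, y notin D, {x,y} in E}. *)
Definition dissolution (e : rel T) (s Ds : nat) (D : {set T})
    (z : T -> T -> nat) : Prop :=
  (forall x y, x \in D -> y \notin D -> e x y -> z x y <= s) /\
  (forall x, x \in D -> \sum_(y | (y \notin D) && e x y) z x y = s) /\
  (forall y, y \notin D -> \sum_(x | (x \in D) && e x y) z x y = Ds).

(* r-biased (s, Delta_s)-dissolution (D, z, za, R) for (G, alpha).
   Condition (e) "alpha v + sum > (s + Ds)/2" is written 2*(...) > s + Ds. *)
Definition biased_dissolution (e : rel T) (s Ds : nat) (alpha : T -> nat)
    (r : nat) (D : {set T}) (z za : T -> T -> nat) (R : {set T}) : Prop :=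
  dissolution e s Ds D z /\
  (forall x y, x \in D -> y \notin D -> e x y -> za x y <= s) /\
  R \subset ~: D /\ #|R| = r /\
  (forall x y, x \in D -> y \notin D -> e x y -> za x y <= z x y) /\
  (forall x, x \in D -> \sum_(y | (y \notin D) && e x y) za x y = alpha x) /\
  (forall y, y \in R ->
         s + Ds < 2 * (alpha y + \sum_(x | (x \in D) && e x y) za x y)).

Definition admits_biased_dissolution (e : rel T) (s Ds : nat)
    (alpha : T -> nat) (r : nat) : Prop :=
  exists D z za R, biased_dissolution e s Ds alpha r D z za R.

End Defs.

(* Main.v *)
Require Import Defs.
From mathcomp Require Import all_boot zify.
Set Implicit Arguments. Unset Strict Implicit. Unset Printing Implicit Defensive.

Lemma sum_bool (T : finType) (P b : pred T) :
  \sum_(y | P y) (b y : nat) = #|[pred y | P y && b y]|.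
Proof.
rewrite -sum1_card big_mkcondr /=; apply: eq_bigr => y _; by case: (b y).
Qed.

Lemma sum_le1 (T : finType) (P : pred T) (f : T -> nat) :
  (forall y, P y -> f y <= 1) ->
  \sum_(y | P y) f y = #|[pred y | P y && (0 < f y)]|.
Proof.
move=> H; rewrite -sum_bool; apply: eq_bigr => y /H; case: (f y) => [|[|]]//.
Qed.

Lemma nb2 (T : finType) (F : rel T) u x y :
  deg F u = 2 -> F u x -> F u y -> x != y ->
  forall c, F u c = (c == x) || (c == y).
Proof.
move=> Hd Hx Hy Hxy c.
have : [set x; y] \subset [set c | F u c].
  by apply/subsetP=> t; rewrite !inE => /orP[]/eqP->.
move/subset_cardP; rewrite cards2 Hxy /deg in Hd *; rewrite Hd => /(_ erefl) E.
by have := E c; rewrite !inE.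
Qed.

Lemma deg2_ex (T : finType) (F : rel T) u p :
  deg F u = 2 -> exists c, F u c && (c != p).
Proof.
rewrite /deg => /eqP/cards2P[a [b [ab E]]].
case: (eqVneq a p) => [ap|ap].
  exists b; have : b \in [set u0 | F u u0] by rewrite E !inE eqxx orbT.
  rewrite inE => ->.
  by rewrite -ap eq_sym.
exists a; have : a \in [set u0 | F u u0] by rewrite E !inE eqxx.
by rewrite inE => ->.
Qed.

Section Walk.
Variable T : finType.
Variable F : rel T.
Hypothesis symF : symmetric F.
Hypothesis irrF : irreflexive F.
Hypothesis degF : forall v, deg F v = 2.

Definition other u p := odflt p [pick y | F u y && (y != p)].

Lemma otherP u p : F u (other u p) && (other u p != p).
Proof.
rewrite /other; case: pickP => [y //|H]; have [c Hc] := deg2_ex p (degF u).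
by have := H c; rewrite Hc.
Qed.

Definition wstep (s : T * T) := (s.2, other s.2 s.1).
Definition nbv v := odflt v [pick y | F v y].

Lemma nbvP v : F v (nbv v).
Proof.
rewrite /nbv; case: pickP => [y //|H]; have [c Hc] := deg2_ex v (degF v).
by have := H c; case/andP: Hc => ->.
Qed.

Variable v : T.
Definition st n := iter n wstep (v, nbv v).
Definition w n := (st n).1.

Lemma st_snd n : (st n).2 = w n.+1.
Proof. by []. Qed.

Lemma w0 : w 0 = v. Proof. by []. Qed.

Lemma wSS n : w n.+2 = other (w n.+1) (w n).
Proof. by []. Qed.

Lemma wF n : F (w n) (w n.+1).
Proof.
case: n => [|n]; first exact: nbvP.
by rewrite wSS; case/andP: (otherP (w n.+1) (w n)).
Qed.

Lemma wneq n : w n.+2 != w n.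
Proof. by rewrite wSS; case/andP: (otherP (w n.+1) (w n)). Qed.

Lemma wnb n c : F (w n.+1) c = (c == w n) || (c == w n.+2).
Proof.
apply: nb2 => //; first by rewrite symF wF.
  exact: wF.
by rewrite eq_sym wneq.
Qed.

Definition ws n := [seq w i | i <- iota 0 n].

Lemma ws_uniq n : (forall j, j < n -> w j \notin ws j) -> uniq (ws n).
Proof.
elim: n => [//|n IH] H.
rewrite /ws -addn1 iotaD map_cat cat_uniq /= -/(ws n) IH; last first.
  by move=> j jn; apply: H; lia.
rewrite add0n /=; have := H n (ltnSn n); rewrite andbT orbF => ->. done.
Qed.

Lemma exw : exists n, w n \in ws n.
Proof.
case Hh: (has (fun n => w n \in ws n) (iota 0 #|T|.+1)).
  by case/hasP: Hh => n _ Hn; exists n.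
have U : uniq (ws #|T|.+1).
  apply: ws_uniq => j jn; apply/negP => Hj; move/negP: Hh; apply.
  by apply/hasP; exists j => //; rewrite mem_iota; lia.
have := max_card (mem (ws #|T|.+1)).
by rewrite (card_uniqP U) size_map size_iota ltnn.
Qed.

Definition k := ex_minn exw.

Lemma kP : w k \in ws k.
Proof. by rewrite /k; case: ex_minnP. Qed.

Lemma kmin n : w n \in ws n -> k <= n.
Proof. by rewrite /k; case: ex_minnP => m _ H /H. Qed.

Lemma k_uniq : uniq (ws k).
Proof.
apply: ws_uniq => j jk; apply/negP => /kmin; lia.
Qed.

Lemma nth_ws n i : i < n -> nth v (ws n) i = w i.
Proof.
move=> ik; rewrite (nth_map 0) ?size_iota // nth_iota //.
Qed.

Lemma winj a b : a < k -> b < k -> w a = w b -> a = b.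
Proof.
move=> ak bk E; apply/eqP.
rewrite -(nth_uniq v _ _ k_uniq) ?size_map ?size_iota // !nth_ws // E //.
Qed.

Lemma k_gt2 : 2 < k.
Proof.
have kp : 0 < k by have := kP; case: k.
case: (ltnP 2 k) => // Hk.
have := kP; case/mapP => j; rewrite mem_iota add0n => /andP[_ jk] E.
have [k1|k2] : k = 1 \/ k = 2 by lia.
  have j0 : j = 0 by lia.
  by have := wF 0; rewrite (_ : 1 = k) // E j0 irrF.
have [j0|j1] : j = 0 \/ j = 1 by lia.
  by have := wneq 0; rewrite (_ : 2 = k) // E j0 eqxx.
by have := wF 1; rewrite (_ : 2 = k) // E j1 irrF.
Qed.

Lemma wk : w k = w 0.
Proof.
have := kP; case/mapP => j; rewrite mem_iota add0n => /andP[_ jk] E.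
case: j E jk => [//|i] E jk.
exfalso.
have : F (w i.+1) (w k.-1).
  have := wF k.-1; rewrite prednK; last by have := k_gt2; lia.
  by rewrite E symF.
rewrite wnb => /orP[] /eqP /(winj _ _) H.
- have : k.-1 = i by apply: H; lia.
  lia.
- case: (ltnP (i.+2) k) => Hik.
    have ki : k.-1 = i.+2 by apply: H; lia.
    have ki3 : k = i.+3 by have := k_gt2; lia.
    by have := wneq i.+1; rewrite -ki3 E eqxx.
  have ki : k = i.+2 by lia.
  by have := wF i.+1; rewrite -ki E irrF.
Qed.

Lemma wk1 : w k.+1 = w 1.
Proof.
have k2 := k_gt2.
have F1 : F (w 0) (w k.-1) by rewrite -wk symF; have := wF k.-1; rewrite prednK //; lia.
have n1 : w 1 != w k.-1 by apply/eqP => /winj H; have := H _ _; lia.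
have := wF k; rewrite wk (nb2 (degF _) (wF 0) F1 n1) => /orP[/eqP //|/eqP E].
by have := wneq k.-1; rewrite (_ : k.-1.+2 = k.+1) ?E ?eqxx //; lia.
Qed.

Lemma stE n : st n = (w n, w n.+1).
Proof. by rewrite -st_snd /w; case: (st n). Qed.

Lemma wper n : w (n + k) = w n.
Proof.
have E : st k = st 0 by rewrite !stE wk wk1.
by rewrite /w /st iterD -/(st k) E.
Qed.

Lemma wmod n : w n = w (n %% k).
Proof.
rewrite {1}(divn_eq n k); elim: (n %/ k) => [|q IH]; first by rewrite mul0n add0n.
by rewrite mulSn -addnA addnC wper.
Qed.

Lemma w_in n : w n \in ws k.
Proof.
rewrite wmod; apply/mapP; exists (n %% k) => //.
by rewrite mem_iota add0n ltn_mod; have := k_gt2; lia.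
Qed.

Lemma index_w n : index (w n) (ws k) = n %% k.
Proof.
have k2 := k_gt2.
rewrite wmod -(nth_ws (n:=k)) ?index_uniq ?k_uniq ?size_map ?size_iota ?ltn_mod //; lia.
Qed.

Lemma ws_comp : (connect F v) =i ws k.
Proof.
have csym : connect_sym F := sym_connect_sym symF.
move=> u; apply/idP/idP.
  move=> cu; rewrite -(closed_connect (e:=F) _ cu) ?(w_in 0) //.
  apply: intro_closed => // x y Fxy /mapP[i _ Ex]; subst x.
  have : F (w (i + k).-1.+1) y by rewrite prednK ?wper //; have := k_gt2; lia.
  by rewrite wnb => /orP[]/eqP->; apply: w_in.
case/mapP => i _ ->; elim: i => [|i IH]; first exact: connect0.
by apply: connect_trans IH (connect1 (wF i)).
Qed.

Lemma card_comp : #|[set u | connect F v u]| = k.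
Proof.
rewrite -(size_iota 0 k) -(size_map w) -/(ws k) -(card_uniqP k_uniq).
by apply: eq_card => u; rewrite inE -ws_comp.
Qed.
End Walk.

Section Label.
Variable T : finType.
Variable F : rel T.
Hypothesis symF : symmetric F.
Hypothesis irrF : irreflexive F.
Hypothesis degF : forall v, deg F v = 2.
Hypothesis m4 : forall v, 4 %| #|[set u | connect F v u]|.

Definition lab u := index u (ws F (root F u) (k F (root F u))) %% 4.

Lemma lab_w r n : root F r = r -> lab (w F r n) = n %% 4.
Proof.
move=> rr.
have csym : connect_sym F := sym_connect_sym symF.
have Er : root F (w F r n) = r.
  rewrite -{2}rr; apply/esym/(rootP csym).
  by rewrite -[connect F r _]/(_ \in connect F r) (ws_comp symF irrF degF) w_in.
rewrite /lab Er (index_w symF irrF degF) modn_dvdm //.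
by rewrite -(card_comp symF irrF degF).
Qed.

Lemma labP u : exists a b m, a != b /\ (forall c, F u c = (c == a) || (c == b))
   /\ lab a = m %% 4 /\ lab u = m.+1 %% 4 /\ lab b = m.+2 %% 4.
Proof.
have csym : connect_sym F := sym_connect_sym symF.
set r := root F u.
have rr : root F r = r by rewrite /r root_root.
have : u \in ws F r (k F r) by rewrite -(ws_comp symF irrF degF) inE csym connect_root.
case/mapP => i _ Eu.
have k2 := k_gt2 irrF degF r.
set m := (i + k F r).-1.
have Eu' : u = w F r m.+1 by rewrite /m prednK ?(wper symF irrF degF) //; lia.
exists (w F r m), (w F r m.+2), m; split; first by rewrite eq_sym wneq.
split; first by move=> c; rewrite Eu' (wnb symF degF).
by rewrite Eu' !lab_w.
Qed.
End Label.

Section Fwd.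
Variable T : finType.
Variables (e F : rel T) (f : T -> nat) (q : nat).
Hypothesis symF : symmetric F.
Hypothesis Fe : forall x y, F x y -> e x y.
Hypothesis hP : forall u, exists a b m, a != b /\ (forall c, F u c = (c == a) || (c == b))
   /\ f a = m %% 4 /\ f u = m.+1 %% 4 /\ f b = m.+2 %% 4.
Hypothesis cardT : #|T| = 4 * q.

Lemma f_lt4 u : f u < 4.
Proof. by have [a [b [m [_ [_ [_ [-> _]]]]]]] := hP u; rewrite ltn_mod. Qed.

Definition up u := odflt u [pick c | F u c && (f c == (f u).+1 %% 4)].

Lemma upP u : F u (up u) /\ f (up u) = (f u).+1 %% 4.
Proof.
rewrite /up; case: pickP => [c /andP[H /eqP ->] //|H].
have [a [b [m [_ [Hn [_ [Hu Hb]]]]]]] := hP u.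
have := H b; rewrite Hn eqxx orbT Hb Hu /=.
by move/negP; case; apply/eqP; lia.
Qed.

Lemma up_inj : injective up.
Proof.
move=> u u' E.
have [F1 f1] := upP u; have [F2 f2] := upP u'.
rewrite E in F1 f1; rewrite [F u _]symF in F1; rewrite [F u' _]symF in F2.
have l1 := f_lt4 u; have l2 := f_lt4 u'.
have fe : f u = f u' by lia.
have [a [b [m [ab [Hn [fa [_ fb]]]]]]] := hP (up u').
rewrite !Hn in F1 F2.
case/orP: F1 => /eqP E1; case/orP: F2 => /eqP E2; rewrite ?E1 ?E2 //; subst; lia.
Qed.

Definition L i := [set u | f u == i].

Lemma L_le i : #|L i| <= #|L (i.+1 %% 4)|.
Proof.
rewrite -(card_imset (L i) up_inj); apply: subset_leq_card.
apply/subsetP => t /imsetP[u]; rewrite !inE => /eqP <- ->.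
by have [_ ->] := upP u.
Qed.

Lemma card_L1 : #|L 1| = q.
Proof.
have h0 : #|L 0| <= #|L 1| := L_le 0.
have h1 : #|L 1| <= #|L 2| := L_le 1.
have h2 : #|L 2| <= #|L 3| := L_le 2.
have h3 : #|L 3| <= #|L 0| := L_le 3.
have : #|T| = #|L 0| + #|L 1| + #|L 2| + #|L 3|.
  rewrite -[#|T|]sum1_card.
  rewrite (eq_bigr (fun u => (f u == 0 : nat) + (f u == 1 : nat) + (f u == 2 : nat) + (f u == 3 : nat))); last first.
    by move=> u _; have := f_lt4 u; case: (f u) => [|[|[|[|]]]].
  rewrite !big_split /= !sum_bool.
  by congr (_ + _ + _ + _); apply: eq_card => u; rewrite !inE.
lia.
Qed.

Lemma fwd_diss : admits_biased_dissolution e 2 2 (fun _ => 1) q.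
Proof.
pose D := [set u | f u %% 2 == 0].
exists D, (fun x y => (F x y : nat)), (fun x y => (F x y && (f y == 1) : nat)), (L 1).
split.
  split; first by move=> x y _ _ _; case: (F x y).
  split.
    move=> x; rewrite inE => xD; rewrite sum_bool.
    have [a [b [m [ab [Hn [fa [fx fb]]]]]]] := hP x.
    rewrite -(_ : #|[set a; b]| = 2); last by rewrite cards2 ab.
    apply: eq_card => c; rewrite !inE -Hn.
    case Fc: (F x c); rewrite ?andbF // (Fe Fc) andbT.
    move: Fc; rewrite Hn => /orP[]/eqP->; rewrite ?fa ?fb; lia.
  move=> y; rewrite inE => yD; rewrite sum_bool.
  have [a [b [m [ab [Hn [fa [fx fb]]]]]]] := hP y.
  rewrite -(_ : #|[set a; b]| = 2); last by rewrite cards2 ab.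
  apply: eq_card => c; rewrite !inE -Hn symF.
  case Fc: (F y c); rewrite ?andbF //.
  have Fc' : F c y by rewrite symF Fc.
  rewrite (Fe Fc') andbT.
  move: Fc; rewrite Hn => /orP[]/eqP->; rewrite ?fa ?fb; lia.
split; first by move=> x y _ _ _; case: (F x y); case: (f y == 1).
split; first by apply/subsetP => u; rewrite !inE => /eqP->.
split; first exact: card_L1.
split; first by move=> x y _ _ _; case: (F x y); case: (f y == 1).
split.
  move=> x; rewrite inE => xD; rewrite sum_bool.
  have [a [b [m [ab [Hn [fa [fx fb]]]]]]] := hP x.
  case: (eqVneq (f a) 1) => fa1.
    rewrite -[in RHS](cards1 a); apply: eq_card => c; rewrite !inE.
    case: (eqVneq c a) => [->|ca].
      have Fa : F x a by rewrite Hn eqxx.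
      by rewrite Fa (Fe Fa) fa1 /=; lia.
    rewrite Hn (negbTE ca) /=; case: (eqVneq c b) => [->|cb]; rewrite ?andbF //=.
    rewrite fb; lia.
  rewrite -[in RHS](cards1 b); apply: eq_card => c; rewrite !inE.
  case: (eqVneq c b) => [->|cb].
    have Fb : F x b by rewrite Hn eqxx orbT.
    rewrite Fb (Fe Fb) fb /=; lia.
  rewrite Hn (negbTE cb) orbF; case: (eqVneq c a) => [->|ca]; rewrite ?andbF //=.
  by rewrite (negbTE fa1) !andbF.
move=> y; rewrite inE => /eqP fy1.
rewrite (_ : \sum_(x | (x \in D) && e x y) (F x y && (f y == 1) : nat) = 2); first by [].
rewrite sum_bool.
have [a [b [m [ab [Hn [fa [fx fb]]]]]]] := hP y.
rewrite -(_ : #|[set a; b]| = 2); last by rewrite cards2 ab.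
apply: eq_card => c; rewrite !inE -Hn symF fy1 eqxx andbT.
case Fc: (F y c); rewrite ?andbF //.
have Fc' : F c y by rewrite symF Fc.
rewrite (Fe Fc') andbT.
move: Fc; rewrite Hn => /orP[]/eqP->; rewrite ?fa ?fb; lia.
Qed.
End Fwd.

Lemma sum_cst (T : finType) (P : pred T) c : \sum_(x | P x) c = #|[pred x | P x]| * c.
Proof. by rewrite sum_nat_const. Qed.

Lemma sum_split1 (T : finType) (P : pred T) (f g : T -> nat) j :
  P j -> (forall i, P i -> g i <= f i) -> \sum_(i | P i) f i = f j ->
  \sum_(i | P i) g i = g j.
Proof.
move=> Pj le; rewrite (bigD1 j) //= (bigD1 j Pj) /= => Hf.
have : \sum_(i | P i && (i != j)) f i = 0 by lia.
move=> H0; have : \sum_(i | P i && (i != j)) g i <= \sum_(i | P i && (i != j)) f i.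
  by apply: leq_sum => i /andP[/le].
lia.
Qed.

Lemma exch (T : finType) (e : rel T) (D : {set T}) (C : pred T) (g : T -> T -> nat) :
 (forall x y, x \in D -> y \notin D -> e x y -> 0 < g x y -> C x = C y) ->
 \sum_(x | C x && (x \in D)) \sum_(y | (y \notin D) && e x y) g x y =
 \sum_(y | C y && (y \notin D)) \sum_(x | (x \in D) && e x y) g x y.
Proof.
move=> Hc.
pose h x y := if [&& C x, x \in D, y \notin D & e x y] then g x y else 0.
have -> : \sum_(x | C x && (x \in D)) \sum_(y | (y \notin D) && e x y) g x y =
          \sum_x \sum_y h x y.
  rewrite big_mkcond; apply: eq_bigr => x _ /=.
  case Cx: (C x); case Dx: (x \in D) => /=;
    try by (rewrite big1 // => y _; rewrite /h Cx Dx).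
  rewrite big_mkcond; apply: eq_bigr => y _; by rewrite /h Cx Dx.
have -> : \sum_(y | C y && (y \notin D)) \sum_(x | (x \in D) && e x y) g x y =
          \sum_y \sum_x h x y.
  rewrite big_mkcond; apply: eq_bigr => y _ /=.
  have E x : C y -> y \notin D -> h x y = if (x \in D) && e x y then g x y else 0.
    move=> Cy Dy; rewrite /h Dy.
    case: (boolP (x \in D)) => Dx; last by case: (C x); case: (x \in D); case: (e x y).
    case: (boolP (e x y)) => exy; last by case: (C x); case: (x \in D); case: (e x y).
    case: (posnP (g x y)) => [->|gp]; first by case: (C x); case: (x \in D); case: (e x y).
    by rewrite (Hc x y) // Cy.
  case Cy: (C y); case Dy: (y \in D) => /=.
  - rewrite big1 // => x _; rewrite /h Dy; by case: (C x); case: (x \in D); case: (e x y).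
  - by rewrite big_mkcond; apply: eq_bigr => x _; rewrite E // Dy.
  - rewrite big1 // => x _; rewrite /h Dy; by case: (C x); case: (x \in D); case: (e x y).
  rewrite big1 // => x _; rewrite /h Dy /=.
  case: (boolP (x \in D)) => Dx; last by case: (C x).
  case: (boolP (e x y)) => exy; last by case: (C x).
  case: (posnP (g x y)) => [->|gp]; first by case: (C x); case: (x \in D); case: (e x y).
  by rewrite (Hc x y) ?Cy ?Dy.
exact: exchange_big.
Qed.

Section Bwd.
Variable T : finType.
Variables (e : rel T) (q : nat) (D : {set T}) (z za : T -> T -> nat) (R : {set T}).
Hypothesis syme : symmetric e.
Hypothesis cardT : #|T| = 4 * q.
Hypothesis H : biased_dissolution e 2 2 (fun _ => 1) q D z za R.

Let zle : forall x y, x \in D -> y \notin D -> e x y -> z x y <= 2.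
Proof. by case: H => [[]]. Qed.
Let zD : forall x, x \in D -> \sum_(y | (y \notin D) && e x y) z x y = 2.
Proof. by case: H => [[_ []]]. Qed.
Let zN : forall y, y \notin D -> \sum_(x | (x \in D) && e x y) z x y = 2.
Proof. by case: H => [[_ []]]. Qed.
Let RD : R \subset ~: D.
Proof. by case: H => [_ [_ []]]. Qed.
Let cR : #|R| = q.
Proof. by case: H => [_ [_ [_ []]]]. Qed.
Let zaz : forall x y, x \in D -> y \notin D -> e x y -> za x y <= z x y.
Proof. by case: H => [_ [_ [_ [_ []]]]]. Qed.
Let zaD : forall x, x \in D -> \sum_(y | (y \notin D) && e x y) za x y = 1.
Proof. by case: H => [_ [_ [_ [_ [_ []]]]]]. Qed.
Let zaR : forall y, y \in R -> 2 + 2 < 2 * (1 + \sum_(x | (x \in D) && e x y) za x y).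
Proof. by case: H => [_ [_ [_ [_ [_ []]]]]]. Qed.

Definition s y := \sum_(x | (x \in D) && e x y) za x y.

Lemma RnD y : y \in R -> y \notin D.
Proof. by move=> yR; have := subsetP RD y yR; rewrite inE. Qed.

Lemma s_le2 y : y \notin D -> s y <= 2.
Proof.
move=> yD; rewrite -(zN yD); apply: leq_sum => x /andP[xD exy]; exact: zaz.
Qed.

Lemma sR y : y \in R -> s y = 2.
Proof. move=> yR; have := zaR yR; have := s_le2 (RnD yR); rewrite /s; lia. Qed.

Lemma cardD : #|D| = 2 * q.
Proof.
have := exch (C := predT) (g := z) (e := e) (D := D) (fun _ _ _ _ _ _ => erefl).
rewrite (eq_bigr (fun _ => 2)) /=; last by move=> x /zD.
rewrite [in RHS](eq_bigr (fun _ => 2)) /=; last by move=> y /zN.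
rewrite !sum_cst.
have := cardsC D; rewrite cardT.
have -> : #|[pred x | x \in D]| = #|D| by apply: eq_card.
have -> : #|[pred x | x \notin D]| = #|~: D| by apply: eq_card => x; rewrite !inE.
lia.
Qed.

Lemma s0 y : y \notin D -> y \notin R -> s y = 0.
Proof.
move=> yD yR.
have := exch (C := predT) (g := za) (e := e) (D := D) (fun _ _ _ _ _ _ => erefl).
rewrite (eq_bigr (fun _ => 1)) /=; last by move=> x /zaD.
rewrite sum_cst (bigID (fun y => y \in R)) /=.
rewrite (eq_bigl (fun y => y \in R)); last by move=> t; case: (boolP (t \in R)) => tR; rewrite ?andbT ?andbF // RnD.
rewrite (eq_bigr (fun _ => 2)); last by move=> t /sR.
rewrite sum_cst.
have -> : #|[pred x | x \in D]| = #|D| by apply: eq_card.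
have -> : #|[pred x | x \in R]| = #|R| by apply: eq_card.
rewrite cardD cR => E.
have /eqP : \sum_(i | (i \notin D) && (i \notin R)) \sum_(x | (x \in D) && e x i) za x i = 0 by lia.
rewrite sum_nat_eq0 => /forallP /(_ y); rewrite yD yR /= => /eqP.
by [].
Qed.

Lemma zle1 x y : x \in D -> y \notin D -> e x y -> z x y <= 1.
Proof.
move=> xD yD exy; have := zle xD yD exy; case: (ltnP 1 (z x y)) => // z2 _.
have zx2 : z x y = 2 by have := zle xD yD exy; lia.
have E1 : \sum_(y' | (y' \notin D) && e x y') za x y' = za x y.
  apply: (sum_split1 (f := z x)); first by rewrite yD.
    by move=> i /andP[iD ei]; apply: zaz.
  by rewrite zD // zx2.
have za1 : za x y = 1 by rewrite -E1 zaD.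
have E2 : s y = za x y.
  apply: (sum_split1 (f := fun x' => z x' y)); first by rewrite xD.
    by move=> i /andP[iD ei]; apply: zaz.
  by rewrite zN // zx2.
case: (boolP (y \in R)) => yR.
  by have := sR yR; rewrite E2 za1.
by have := s0 yD yR; rewrite E2 za1.
Qed.

Definition Fb x y := e x y && (((x \in D) && (y \notin D) && (0 < z x y)) ||
                               ((y \in D) && (x \notin D) && (0 < z y x))).

Lemma Fsym : symmetric Fb.
Proof. by move=> x y; rewrite /Fb syme orbC. Qed.

Lemma degFb x : deg Fb x = 2.
Proof.
rewrite /deg; case: (boolP (x \in D)) => xD.
  rewrite -(zD xD) sum_le1; last by move=> u /andP[uD exu]; apply: zle1.
  by apply: eq_card => u; rewrite !inE /Fb xD /= andbF orbF; case: (e x u); case: (u \in D).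
rewrite -(zN xD) sum_le1; last by move=> u /andP[uD exu]; apply: zle1.
apply: eq_card => u; rewrite !inE /Fb (negbTE xD) /= syme.
by case: (u \in D); case: (e u x).
Qed.

Lemma comp4 v : 4 %| #|[set u | connect Fb v u]|.
Proof.
have csym : connect_sym Fb := sym_connect_sym Fsym.
pose Cp := fun u => connect Fb v u.
have cl x y : x \in D -> y \notin D -> e x y -> 0 < z x y -> Cp x = Cp y.
  move=> xD yD exy zp; apply: (connect_closed csym v).
  by rewrite /Fb xD yD exy zp.
have E1 := exch (C := Cp) (g := z) (e := e) (D := D) cl.
rewrite (eq_bigr (fun _ => 2)) in E1; last by move=> x /andP[_ /zD].
rewrite [in RHS](eq_bigr (fun _ => 2)) in E1; last by move=> y /andP[_ /zN].
rewrite !sum_cst in E1.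
have E2 := exch (C := Cp) (g := za) (e := e) (D := D)
  (fun x y xD yD exy zp => cl x y xD yD exy (leq_trans zp (zaz xD yD exy))).
rewrite (eq_bigr (fun _ => 1)) in E2; last by move=> x /andP[_ /zaD].
rewrite [in RHS](eq_bigr (fun y => (y \in R : nat) * 2)) in E2; last first.
  move=> y /andP[_ yD]; case: (boolP (y \in R)) => yR.
    by have := sR yR; rewrite /s => ->.
  by have := s0 yD yR; rewrite /s => ->.
rewrite -big_distrl /= sum_bool sum_cst in E2.
have -> : #|[set u | connect Fb v u]| =
   #|[pred x | Cp x && (x \in D)]| + #|[pred x | Cp x && (x \notin D)]|.
  rewrite -sum1_card (bigID (fun u => u \in D)) /= !sum_cst !muln1.
  by congr (_ + _); apply: eq_card => u; rewrite !inE.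
apply/dvdnP; exists #|[pred y | Cp y && (y \notin D) && (y \in R)]|; lia.
Qed.
End Bwd.

Unset Implicit Arguments.

Theorem lemma4 (T : finType) (e : rel T) (q : nat) :
  0 < q -> simple_graph e -> #|T| = 4 * q ->
  ((exists F : rel T, two_factor e F /\ cycle_lengths_mult4 F) <->
   admits_biased_dissolution e 2 2 (fun _ => 1) q).
Proof.
move=> q0 [syme irre] cT; split.
  case=> F [[symF [Fe degF]] m4].
  have irrF : irreflexive F by move=> x; apply/negP => /Fe; rewrite irre.
  exact: (fwd_diss symF Fe (labP symF irrF degF m4) cT).
case=> D [z [za [R H]]].
exists (Fb e D z); split; last exact: (comp4 syme cT H).
split; first exact: Fsym.
split; first by move=> x y /andP[].
exact: (degFb syme cT H).
Qed.
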